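(* Let $(M^3,g)$ be a Riemannian $3$-manifold with Ricci tensor $R_{ij}$ and scalar curvature $R$, and let $h$ be a symmetric $2$-tensor on $M$ with trace $H=g^{ij}h_{ij}$. Then at every point \[ |h|^2|\mathrm{Rc}|^2-2RH\,\mathrm{Rc}\cdot h+2R\,\mathrm{Rc}\cdot h^2+\tfrac12R^2\left(H^2-|h|^2\right)\geq0, \] where $\mathrm{Rc}\cdot h=R_{ij}h_{ij}$ and $\mathrm{Rc}\cdot h^2=R_{ij}h_{ik}h_{kj}$ (contractions with respect to $g$).
   Context: Norms and contractions are taken with respect to $g$ (orthonormal frame, repeated indices summed). *)

(* Defs.v *)
(* Pointwise algebraic content of the statement:
   in a g-orthonormal frame at a point, Rc and h are symmetric 3x3 real matrices. *)
From HB Require Import structures.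
From mathcomp Require Import all_boot all_order all_algebra.
Set Implicit Arguments. Unset Strict Implicit. Unset Printing Implicit Defensive.
Import Order.TTheory GRing.Theory Num.Theory.
Local Open Scope ring_scope.

Definition contr (R : ringType) (n : nat) (A B : 'M[R]_n) : R :=
  \sum_(i < n) \sum_(j < n) A i j * B i j.

Definition sqnorm (R : ringType) (n : nat) (A : 'M[R]_n) : R := contr A A.

Definition contr_sq (R : ringType) (n : nat) (A B : 'M[R]_n) : R :=
  \sum_(i < n) \sum_(j < n) \sum_(k < n) A i j * B i k * B k j.

(* Main.v *)
Require Import Defs.
From HB Require Import structures.
From mathcomp Require Import all_boot all_order all_algebra.
From mathcomp Require Import ring.
Import Order.TTheory GRing.Theory Num.Theory.
Local Open Scope ring_scope.

Lemma sum3 (R : realFieldType) (F : 'I_3 -> R) :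
  \sum_(i < 3) F i = F 0 + F 1 + F 2.
Proof.
rewrite !big_ord_recr big_ord0 /= add0r.
by congr (F _ + F _ + F _); apply: val_inj.
Qed.

Lemma sqnorm_ge0 (R : realFieldType) (A : 'M[R]_3) : 0 <= sqnorm A.
Proof.
rewrite /sqnorm /contr; apply: sumr_ge0 => i _; apply: sumr_ge0 => j _.
by rewrite -expr2 sqr_ge0.
Qed.

Lemma pos6 (R : realFieldType) (q s : R) : 6 * q = s -> 0 <= s -> 0 <= q.
Proof.
move=> <-; rewrite pmulr_rge0 //.
Qed.

Theorem lemma3 (R : realFieldType) (Rc h : 'M[R]_3) :
  Rc^T = Rc -> h^T = h ->
  let Rs := \tr Rc in
  let H := \tr h in
  0 <= sqnorm h * sqnorm Rc - 2 * Rs * H * contr Rc h + 2 * Rs * contr_sq Rc h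
       + 2^-1 * Rs ^+ 2 * (H ^+ 2 - sqnorm h).
Proof.
move=> sRc sh /=.
set Rs := \tr Rc; set H := \tr h.
pose U : 'M[R]_3 := H *: Rc - Rs *: h.
pose T : 'M[R]_3 := 3 *: (Rc *m h + h *m Rc) - Rs *: h - (2 * H) *: Rc
                    + (Rs * H - 2 * contr Rc h)%:M.
pose C : 'M[R]_3 := Rc *m h - h *m Rc.
apply: (@pos6 R _ (2 * sqnorm U + sqnorm T + 3 * sqnorm C)); last first.
  apply: addr_ge0; first apply: addr_ge0.
  - by apply: mulr_ge0; [|apply: sqnorm_ge0].
  - exact: sqnorm_ge0.
  - by apply: mulr_ge0; [|apply: sqnorm_ge0].
have e : forall (A : 'M[R]_3) i j, A^T = A -> A i j = A j i.
  by move=> A i j sA; rewrite -{1}sA mxE.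
have r10 := e _ 1 0 sRc; have r20 := e _ 2 0 sRc; have r21 := e _ 2 1 sRc.
have h10 := e _ 1 0 sh; have h20 := e _ 2 0 sh; have h21 := e _ 2 1 sh.
rewrite /U /T /C /Rs /H /sqnorm /contr /contr_sq /mxtrace.
rewrite !sum3 !mxE ?sum3 ?mxE /=.
rewrite r10 r20 r21 h10 h20 h21.
rewrite ?mulr0n ?mulr1n.
field.
by rewrite ?pnatr_eq0 ?oner_eq0 ?(eqr_nat R 2 0).
Qed.
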